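(* Let $R$ be a unital associative ring and let $J=J_2\circ J_1$ act on $M_2(R)$. Then ${\rm dom}(J)={\rm dom}(J^{-1})=M_2^*(R)\cap M_2^\star(R)$, and $J$ maps ${\rm dom}(J)$ bijectively onto itself according to the formula $$J(A)=\begin{pmatrix} a-bd^{-1}c & b-ac^{-1}d\\ c-db^{-1}a & d-ca^{-1}b\end{pmatrix},\qquad A=\begin{pmatrix} a&b\\ c&d\end{pmatrix}\in M_2^\star(R)\cap M_2^*(R).$$ Furthermore, $J(A)\sim J^{-1}(A)$ for each $A\in{\rm dom}(J)$, and $A\in{\rm dom}(J)={\rm dom}(J^{-1})$ if and only if $a,b,c,d,db^{-1}-ca^{-1}\in R^*$.
   Context: $R^*$ denotes the units of $R$. $M_n^*(R)$ is the set of invertible $n\times n$ matrices over $R$, $M_n^\star(R)$ the set of $n\times n$ matrices with all entries in $R^*$. $J_1(M)=M^{-1}$ on $M_n^*(R)$; $J_2(M)_{jk}=(M_{kj})^{-1}$ on $M_n^\star(R)$. Compositions $g\circ f$ have domain $\{x\in{\rm dom}(f):f(x)\in{\rm dom}(g)\}$. $J^{-1}:=J_1\circ J_2$. For $A,B\in M_n(R)$, $A\sim B$ means $B=D_1^{-1}AD_2$ for some invertible diagonal matrices $D_1,D_2$. *)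

(* Defs.v *)
From HB Require Import structures.
From mathcomp Require Import all_boot all_order all_algebra.
From Stdlib Require Import ClassicalEpsilon.
Set Implicit Arguments. Unset Strict Implicit. Unset Printing Implicit Defensive.
Import Order.TTheory GRing.Theory.
Local Open Scope ring_scope.

Section J.
Variable R : unitRingType.

Definition is_inv (A B : 'M[R]_2) : Prop := A *m B = 1%:M /\ B *m A = 1%:M.

(* A \in M_2^*(R) *)
Definition invertible2 (A : 'M[R]_2) : Prop := exists B, is_inv A B.

(* A \in M_2^\star(R): all entries are units *)
Definition allunits2 (A : 'M[R]_2) : bool :=
  [forall i, [forall j, A i j \is a GRing.unit]].

Definition J1 (A : 'M[R]_2) : option 'M[R]_2 :=
  match excluded_middle_informative (invertible2 A) with
  | left h => Some (proj1_sig (constructive_indefinite_description _ h))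
  | right _ => None
  end.

Definition J2 (A : 'M[R]_2) : option 'M[R]_2 :=
  if allunits2 A then Some (\matrix_(j, k) (A k j)^-1) else None.

Definition J (A : 'M[R]_2) : option 'M[R]_2 := obind J2 (J1 A).
Definition Jinv (A : 'M[R]_2) : option 'M[R]_2 := obind J1 (J2 A).

Definition dom (f : 'M[R]_2 -> option 'M[R]_2) (A : 'M[R]_2) : Prop :=
  exists B, f A = Some B.

Definition dsim (A B : 'M[R]_2) : Prop :=
  exists D1 D1' D2 : 'M[R]_2,
    [/\ is_diag_mx D1, is_diag_mx D2, is_inv D1 D1', invertible2 D2
      & B = D1' *m A *m D2].

End J.

(* Main.v *)
Require Import Defs.
From HB Require Import structures.
From mathcomp Require Import all_boot all_order all_algebra.
From Stdlib Require Import ClassicalEpsilon.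
Set Implicit Arguments. Unset Strict Implicit. Unset Printing Implicit Defensive.
Import Order.TTheory GRing.Theory.
Local Open Scope ring_scope.

Section Scal.
Variable R : unitRingType.
Implicit Types a b c d x y z w : R.

Definition AB4 a b c d x y z w :=
  [/\ a*x+b*z = 1, a*y+b*w = 0, c*x+d*z = 0 & c*y+d*w = 1].

Lemma S1 a b c d x y z w :
  a \is a GRing.unit -> b \is a GRing.unit -> c \is a GRing.unit ->
  AB4 a b c d x y z w -> AB4 x y z w a b c d ->
  [/\ w \is a GRing.unit, w^-1 = d - c * a^-1 * b,
      y = -(a^-1 * b * w), z = -(w * c * a^-1) &
      x = -(y * d * b^-1) /\ x = -(c^-1 * d * z)].
Proof.
move=> Ua Ub Uc [e1 e2 e3 e4] [f1 f2 f3 f4].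
have Hy : y = -(a^-1 * b * w).
  by rewrite -(mulKr Ua y); move/eqP: e2; rewrite addr_eq0 => /eqP ->; rewrite mulrN !mulrA.
have Hz : z = -(w * c * a^-1).
  by rewrite -(mulrK Ua z); move/eqP: f3; rewrite addr_eq0 => /eqP ->; rewrite mulNr.
have H1 : (d - c * a^-1 * b) * w = 1.
  by rewrite -e4 Hy mulrBl mulrN !mulrA addrC.
have H2 : w * (d - c * a^-1 * b) = 1.
  by rewrite -f4 Hz mulrBr mulNr !mulrA addrC.
have Uw : w \is a GRing.unit by apply/unitrP; exists (d - c * a^-1 * b).
split => //.
- by rewrite -[d - _](mulKr Uw) H2 mulr1.
split.
- by rewrite -(mulrK Ub x); move/eqP: f2; rewrite addr_eq0 => /eqP ->; rewrite mulNr.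
- by rewrite -(mulKr Uc x); move/eqP: e3; rewrite addr_eq0 => /eqP ->; rewrite mulrN !mulrA.
Qed.

Lemma S2 a b c d : a \is a GRing.unit -> (d - c * a^-1 * b) \is a GRing.unit ->
  let w := (d - c * a^-1 * b)^-1 in
  let x := a^-1 + a^-1 * b * w * c * a^-1 in
  let y := -(a^-1 * b * w) in let z := -(w * c * a^-1) in
  AB4 a b c d x y z w /\ AB4 x y z w a b c d.
Proof.
move=> Ua Us w x y z.
have sw : (d - c * a^-1 * b) * w = 1 by rewrite mulrV.
have ws : w * (d - c * a^-1 * b) = 1 by rewrite mulVr.
split; split.
- by rewrite /x /z mulrDr ?mulrA mulrV // mul1r mulrN ?mulrA addrK.
- by rewrite /y mulrN ?mulrA mulrV // mul1r addNr.
- have E : (d - c * a^-1 * b) * w * c * a^-1 = c * a^-1 by rewrite sw mul1r.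
  rewrite !mulrBl ?mulrA in E.
  by rewrite /x /z mulrDr mulrN ?mulrA -{1}E subrK subrr.
- by rewrite /y mulrN ?mulrA addrC -sw mulrBl ?mulrA.
- by rewrite /x /y mulrDl ?mulrA mulVr // mulNr ?mulrA divrK // addrK.
- have E : a^-1 * b * w * (d - c * a^-1 * b) = a^-1 * b by rewrite -mulrA ws mulr1.
  rewrite !mulrBr ?mulrA in E.
  by rewrite /x /y mulrDl mulNr ?mulrA -{1}E subrK subrr.
- by rewrite /z mulNr ?mulrA divrK // addNr.
- by rewrite /z mulNr ?mulrA addrC -ws mulrBr ?mulrA.
Qed.

Lemma ord2 (i : 'I_2) : i = 0 \/ i = 1.
Proof.
case: i => [[|[|n]] Hi].
- by left; apply: val_inj.
- by right; apply: val_inj.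
- by [].
Qed.

Lemma mul2E (A B : 'M[R]_2) i j : (A *m B) i j = A i 0 * B 0 j + A i 1 * B 1 j.
Proof.
rewrite mxE big_ord_recl big_ord1.
by have -> : lift ord0 ord0 = 1 :> 'I_2 by apply: val_inj.
Qed.

Lemma mx2P (A B : 'M[R]_2) :
  A = B <-> [/\ A 0 0 = B 0 0, A 0 1 = B 0 1, A 1 0 = B 1 0 & A 1 1 = B 1 1].
Proof.
split; first by move=> ->.
case=> e1 e2 e3 e4; apply/matrixP => i j.
by case: (ord2 i) => ->; case: (ord2 j) => ->.
Qed.

Lemma mul1E (A B : 'M[R]_2) : A *m B = 1%:M <->
  AB4 (A 0 0) (A 0 1) (A 1 0) (A 1 1) (B 0 0) (B 0 1) (B 1 0) (B 1 1).
Proof.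
rewrite mx2P !mul2E !mxE /=.
by split; case=> *; split.
Qed.

Lemma allunits2P (A : 'M[R]_2) : allunits2 A <->
  [/\ A 0 0 \is a GRing.unit, A 0 1 \is a GRing.unit,
      A 1 0 \is a GRing.unit & A 1 1 \is a GRing.unit].
Proof.
split.
  by move=> /forallP H; split; [move: (H 0)|move: (H 0)|move: (H 1)|move: (H 1)];
    move=> /forallP H'; [apply: (H' 0)|apply: (H' 1)|apply: (H' 0)|apply: (H' 1)].
case=> u1 u2 u3 u4; apply/forallP => i; apply/forallP => j.
by case: (ord2 i) => ->; case: (ord2 j) => ->.
Qed.

Lemma uM (x y : R) : x \is a GRing.unit -> y \is a GRing.unit -> x * y \is a GRing.unit.
Proof. by move=> ux uy; rewrite unitrMl. Qed.

Lemma P1 a b c d x y z w : AB4 a b c d x y z w -> AB4 c d a b y x w z.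
Proof. by case. Qed.
Lemma P2 a b c d x y z w : AB4 a b c d x y z w -> AB4 b a d c z w x y.
Proof. by case=> e1 e2 e3 e4; split; rewrite addrC. Qed.

Lemma Sinv a b c d x y z w :
  a \is a GRing.unit -> b \is a GRing.unit -> c \is a GRing.unit -> d \is a GRing.unit ->
  AB4 a b c d x y z w -> AB4 x y z w a b c d ->
  [/\ [/\ x \is a GRing.unit, y \is a GRing.unit, z \is a GRing.unit & w \is a GRing.unit],
      [/\ x^-1 = a - b * d^-1 * c, y^-1 = c - d * b^-1 * a,
          z^-1 = b - a * c^-1 * d & w^-1 = d - c * a^-1 * b] &
      [/\ y = -(a^-1 * b * w), z = -(w * c * a^-1),
          x = -(y * d * b^-1) & x = -(c^-1 * d * z)]].
Proof.
move=> Ua Ub Uc Ud h1 h2.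
have [Uw Ew Hy Hz [Hx Hx']] := S1 Ua Ub Uc h1 h2.
have [Ux Ex _ _ _] := S1 Ud Uc Ub (P1 (P2 h1)) (P2 (P1 h2)).
have [Uy Ey _ _ _] := S1 Ub Ua Ud (P2 h1) (P1 h2).
have [Uz Ez _ _ _] := S1 Uc Ud Ua (P1 h1) (P2 h2).
by split.
Qed.

Definition tinv (A : 'M[R]_2) : 'M[R]_2 := \matrix_(j, k) (A k j)^-1.
Definition mk2 (x y z w : R) : 'M[R]_2 :=
  \matrix_(i, j) if i == 0 then (if j == 0 then x else y) else (if j == 0 then z else w).

Lemma is_invE (A B : 'M[R]_2) : is_inv A B <->
  AB4 (A 0 0) (A 0 1) (A 1 0) (A 1 1) (B 0 0) (B 0 1) (B 1 0) (B 1 1) /\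
  AB4 (B 0 0) (B 0 1) (B 1 0) (B 1 1) (A 0 0) (A 0 1) (A 1 0) (A 1 1).
Proof. by rewrite /is_inv !mul1E. Qed.

Lemma inv_uniq (A B C : 'M[R]_2) : is_inv A B -> is_inv A C -> B = C.
Proof. by move=> [hAB hBA] [hAC hCA]; rewrite -[B]mulmx1 -hAC mulmxA hBA mul1mx. Qed.

Lemma is_invC (A B : 'M[R]_2) : is_inv A B -> is_inv B A.
Proof. by case. Qed.

Lemma inv_of4 (A : 'M[R]_2) x y z w :
  AB4 (A 0 0) (A 0 1) (A 1 0) (A 1 1) x y z w ->
  AB4 x y z w (A 0 0) (A 0 1) (A 1 0) (A 1 1) -> is_inv A (mk2 x y z w).
Proof. by move=> h1 h2; apply/is_invE; rewrite !mxE /=. Qed.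

Lemma schur_inv (A : 'M[R]_2) : A 0 0 \is a GRing.unit ->
  A 1 1 - A 1 0 * (A 0 0)^-1 * A 0 1 \is a GRing.unit -> invertible2 A.
Proof. move=> U1 U2; have [h1 h2] := S2 U1 U2; eexists; exact: inv_of4 h1 h2. Qed.

Lemma tinvK (A : 'M[R]_2) : tinv (tinv A) = A.
Proof. by apply/matrixP => i j; rewrite !mxE invrK. Qed.

Lemma tinv_units (A : 'M[R]_2) : allunits2 (tinv A) <-> allunits2 A.
Proof.
split=> /allunits2P; rewrite ?mxE ?unitrV => -[*]; apply/allunits2P; rewrite ?mxE ?unitrV //.
Qed.

Lemma M1 (A V : 'M[R]_2) : is_inv A V -> allunits2 A -> allunits2 V.
Proof.
move=> /is_invE [h1 h2] /allunits2P [u1 u2 u3 u4].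
by have [[] ] := Sinv u1 u2 u3 u4 h1 h2; move=> *; apply/allunits2P.
Qed.

Lemma schurT a b c d w : a \is a GRing.unit -> b \is a GRing.unit ->
  c \is a GRing.unit -> d \is a GRing.unit -> w \is a GRing.unit ->
  w^-1 = d - c * a^-1 * b -> d^-1 - b^-1 * a * c^-1 \is a GRing.unit.
Proof.
move=> Ua Ub Uc Ud Uw Ew.
have -> : d^-1 - b^-1 * a * c^-1 = b^-1 * (-(a * c^-1 * w^-1)) * d^-1.
  rewrite Ew mulrN mulNr !mulrBr !mulrBl ?mulrA (mulrK Ud) (divrK Uc) (mulrK Ua).
  by rewrite (mulVr Ub) mul1r opprB.
by rewrite !uM ?unitrV ?unitrN ?uM ?unitrV.
Qed.

Lemma M2 (A V : 'M[R]_2) : is_inv A V -> allunits2 A -> invertible2 (tinv A).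
Proof.
move=> hV hA; have := hV; move=> /is_invE [h1 h2]; have := hA.
move=> /allunits2P [u1 u2 u3 u4].
have [[Ux Uy Uz Uw] [Ex Ey Ez Ew] _] := Sinv u1 u2 u3 u4 h1 h2.
apply: schur_inv; rewrite !mxE ?unitrV // invrK.
exact: schurT Uw Ew.
Qed.

Lemma J1E (A B : 'M[R]_2) : J1 A = Some B <-> is_inv A B.
Proof.
rewrite /J1; case: excluded_middle_informative => h.
  case: constructive_indefinite_description => V HV /=.
  split; first by case=> <-.
  by move=> HB; rewrite (inv_uniq HV HB).
by split=> // HB; exfalso; apply: h; exists B.
Qed.

Lemma J1N (A : 'M[R]_2) : J1 A = None -> ~ invertible2 A.
Proof. by move=> E [V HV]; move/J1E: HV; rewrite E. Qed.

Lemma J2E (A : 'M[R]_2) : J2 A = if allunits2 A then Some (tinv A) else None.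
Proof. by []. Qed.

Lemma JE (A B : 'M[R]_2) : J A = Some B <->
  exists V, [/\ is_inv A V, allunits2 V & B = tinv V].
Proof.
rewrite /J; case E: (J1 A) => [V|] /=.
  move/J1E: E => HV; rewrite J2E; case U: (allunits2 V).
    split; first by case=> <-; exists V.
    by case=> V' [HV' _ ->]; rewrite (inv_uniq HV HV').
  split=> //; case=> V' [HV' U' _]; move: U; rewrite (inv_uniq HV HV') U' //.
split=> //; case=> V [HV _ _]; exfalso; exact: (J1N E) (ex_intro _ V HV).
Qed.

Lemma JinvE (A Y : 'M[R]_2) : Jinv A = Some Y <-> allunits2 A /\ is_inv (tinv A) Y.
Proof.
rewrite /Jinv J2E; case U: (allunits2 A) => /=.
  by rewrite J1E; split=> [|[]].
by split=> // -[].
Qed.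

Lemma sim_scal a b c d w w' :
  a \is a GRing.unit -> b \is a GRing.unit -> c \is a GRing.unit ->
  d \is a GRing.unit -> w \is a GRing.unit -> w' \is a GRing.unit ->
  let y := -(a^-1 * b * w) in let z := -(w * c * a^-1) in
  let x := -(y * d * b^-1) in
  let y' := -(a * c^-1 * w') in let z' := -(w' * b^-1 * a) in
  let x' := -(b * d^-1 * z') in
  let v1 := w * w' in let v0 := a^-1 * b * v1 * b^-1 * a in
  [/\ x^-1 * v0 = x', z^-1 * v1 = y', y^-1 * v0 = z' & w^-1 * v1 = w'].
Proof.
move=> Ua Ub Uc Ud Uw Uw' y z x y' z' x' v1 v0.
have Ey : y^-1 = -(w^-1 * b^-1 * a).
  by rewrite /y invrN !invrM ?uM ?unitrV // invrK mulrA.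
have Ez : z^-1 = -(a * c^-1 * w^-1).
  by rewrite /z invrN !invrM ?uM ?unitrV // invrK mulrA.
have Uy : y \is a GRing.unit by rewrite /y unitrN !uM ?unitrV.
have Ex : x^-1 = -(b * d^-1 * y^-1).
  by rewrite /x invrN !invrM ?uM ?unitrV // invrK mulrA.
split.
- rewrite Ex Ey /x' /z' /v0 /v1 !mulrN !opprK ?mulrA (mulrK Ua) (divrK Ub).
  by rewrite (divrK Uw).
- by rewrite Ez /y' /v1 mulNr ?mulrA (divrK Uw).
- by rewrite Ey /z' /v0 /v1 mulNr ?mulrA (mulrK Ua) (divrK Ub) (mulVr Uw) mul1r.
- by rewrite /v1 mulKr.
Qed.

Lemma domJ (A : 'M[R]_2) : dom (@J R) A <-> invertible2 A /\ allunits2 A.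
Proof.
split.
  move=> [B /JE [V [HV UV _]]]; split; first by exists V.
  exact: M1 (is_invC HV) UV.
move=> [[V HV] UA]; exists (tinv V); apply/JE; exists V; split=> //.
exact: M1 HV UA.
Qed.

Lemma domJinv (A : 'M[R]_2) : dom (@Jinv R) A <-> invertible2 A /\ allunits2 A.
Proof.
split.
  move=> [Y /JinvE [UA HY]]; split=> //; rewrite -(tinvK A).
  by apply: M2 HY _; apply/tinv_units.
move=> [[V HV] UA]; have [Y HY] := M2 HV UA; exists Y; exact/JinvE.
Qed.

Lemma unitrV_ (x : R) : x \is a GRing.unit -> x^-1 \is a GRing.unit.
Proof. by rewrite unitrV. Qed.

Lemma simJ (A X Y : 'M[R]_2) : J A = Some X -> Jinv A = Some Y -> dsim X Y.
Proof.
move=> /JE [V [HV UV ->]] /JinvE [UA HY].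
move: HV => /is_invE [h1 h2]; move: (UA) => /allunits2P [u1 u2 u3 u4].
have [[Ux Uy Uz Uw] _ [Hy Hz Hx _]] := Sinv u1 u2 u3 u4 h1 h2.
move: HY => /is_invE; rewrite !mxE => -[k1 k2].
have [Uw' _ Hy' Hz' [_ Hx']] : _ := S1 (unitrV_ u1) (unitrV_ u3) (unitrV_ u2) k1 k2.
rewrite !invrK in Hy' Hz' Hx'.
have [e1 e2 e3 e4] := sim_scal u1 u2 u3 u4 Uw Uw'.
rewrite -Hy in e1 e3; rewrite -Hz in e2; rewrite -Hx in e1.
rewrite -Hz' in e1 e3; rewrite -Hx' in e1; rewrite -Hy' in e2.
set v1 := V 1 1 * Y 1 1 in e1 e2 e3 e4.
set v0 := (A 0 0)^-1 * A 0 1 * v1 / A 0 1 * A 0 0 in e1 e2 e3 e4.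
have Uv1 : v1 \is a GRing.unit by rewrite uM.
have Uv0 : v0 \is a GRing.unit by rewrite !uM ?unitrV.
exists 1%:M, 1%:M, (diag_mx (\row_j (if j == 0 then v0 else v1))); split.
- exact: scalar_mx_is_diag.
- exact: diag_mx_is_diag.
- by split; rewrite mulmx1.
- exists (diag_mx (\row_j (if j == 0 then v0^-1 else v1^-1))).
  split; apply/mul1E; rewrite !mxE /= ?mulr1n ?mulr0n ?mulr0 ?mul0r ?addr0 ?add0r;
    split; rewrite ?divrr ?mulVr ?mulr0 ?mul0r ?addr0 ?add0r //.
- rewrite mul1mx mul_mx_diag; apply/mx2P; rewrite !mxE /=.
  by split; symmetry.
Qed.

Lemma domJ_char (A : 'M[R]_2) : dom (@J R) A <->
  [/\ A 0 0 \is a GRing.unit, A 0 1 \is a GRing.unit, A 1 0 \is a GRing.unit,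
      A 1 1 \is a GRing.unit &
      A 1 1 * (A 0 1)^-1 - A 1 0 * (A 0 0)^-1 \is a GRing.unit].
Proof.
split.
  move/domJ => [[V HV] UA]; have := UA => /allunits2P [u1 u2 u3 u4].
  move/is_invE: HV => [h1 h2].
  have [[_ _ _ Uw] [_ _ _ Ew] _] := Sinv u1 u2 u3 u4 h1 h2.
  split=> //.
  rewrite -(mulrK u2 (A 1 0 / A 0 0)) -mulrBl -Ew.
  by rewrite uM ?unitrV.
case=> u1 u2 u3 u4 us; apply/domJ; split; last by apply/allunits2P.
apply: schur_inv => //.
by rewrite -(divrK u2 (A 1 1)) -mulrBl ?mulrA uM.
Qed.

Lemma formula (A : 'M[R]_2) : invertible2 A -> allunits2 A ->
  exists B : 'M[R]_2, J A = Some B /\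
    [/\ B 0 0 = A 0 0 - A 0 1 * (A 1 1)^-1 * A 1 0,
        B 0 1 = A 0 1 - A 0 0 * (A 1 0)^-1 * A 1 1,
        B 1 0 = A 1 0 - A 1 1 * (A 0 1)^-1 * A 0 0 &
        B 1 1 = A 1 1 - A 1 0 * (A 0 0)^-1 * A 0 1].
Proof.
move=> [V HV] UA; exists (tinv V); split.
  by apply/JE; exists V; split=> //; exact: M1 HV UA.
move: HV UA => /is_invE [h1 h2] /allunits2P [u1 u2 u3 u4].
have [_ [Ex Ey Ez Ew] _] := Sinv u1 u2 u3 u4 h1 h2.
by rewrite !mxE.
Qed.
End Scal.

Theorem proposition2 (R : unitRingType) :
  (* dom(J) = dom(J^{-1}) = M_2^*(R) \cap M_2^\star(R) *)
  (forall A : 'M[R]_2, dom (@J R) A <-> invertible2 A /\ allunits2 A) /\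
  (forall A : 'M[R]_2, dom (@Jinv R) A <-> invertible2 A /\ allunits2 A) /\
  (* J maps dom(J) bijectively onto itself *)
  (forall A B : 'M[R]_2, J A = Some B -> dom (@J R) B) /\
  (forall A A' B : 'M[R]_2, J A = Some B -> J A' = Some B -> A = A') /\
  (forall B : 'M[R]_2, dom (@J R) B -> exists A, J A = Some B) /\
  (* the explicit formula *)
  (forall A : 'M[R]_2, invertible2 A -> allunits2 A ->
     let a := A 0 0 in let b := A 0 1 in let c := A 1 0 in let d := A 1 1 in
     exists B : 'M[R]_2, J A = Some B /\
       [/\ B 0 0 = a - b * d^-1 * c, B 0 1 = b - a * c^-1 * d,
           B 1 0 = c - d * b^-1 * a & B 1 1 = d - c * a^-1 * b]) /\
  (* J(A) ~ J^{-1}(A) *)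
  (forall A X Y : 'M[R]_2, dom (@J R) A -> J A = Some X -> Jinv A = Some Y ->
     dsim X Y) /\
  (* characterization of the domain *)
  (forall A : 'M[R]_2,
     let a := A 0 0 in let b := A 0 1 in let c := A 1 0 in let d := A 1 1 in
     dom (@J R) A <->
     [/\ a \is a GRing.unit, b \is a GRing.unit, c \is a GRing.unit,
         d \is a GRing.unit & d * b^-1 - c * a^-1 \is a GRing.unit]).
Proof.
split; first exact: domJ.
split; first exact: domJinv.
split.
  move=> A B /JE [V [HV UV ->]]; apply/domJ; split.
    exact: M2 (is_invC HV) UV.
  by apply/tinv_units.
split.
  move=> A A' B /JE [V [HV UV ->]] /JE [V' [HV' UV' E]].
  have EV : V = V' by rewrite -(tinvK V) E tinvK.
  by subst V'; exact: inv_uniq (is_invC HV) (is_invC HV').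
split.
  move=> B /domJ [[V HV] UB]; have [W HW] := M2 HV UB.
  exists W; apply/JE; exists (tinv B); split.
  - exact: is_invC HW.
  - by apply/tinv_units.
  - by rewrite tinvK.
split; first exact: formula.
split; first by move=> A X Y _; exact: simJ.
exact: domJ_char.
Qed.
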